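(* Let $F(x_1,\dots,x_n)=f_1\wedge\dots\wedge f_m$ and $G(y_1,\dots,y_{n'})=g_1\wedge\dots\wedge g_{m'}$ be CNF formulas such that $F\le^{\oplus}G$. If there exists a $\mathsf{Res}[\oplus]$ refutation of $G$ with $s$ steps, then there exists a $\mathsf{Res}[\oplus]$ refutation of $F$ with $2nm'+s$ steps. (In particular, $\mathsf{Res}[\oplus]$ is closed under simple parity reductions.)
   Context: Simple parity reduction: $F\le^{\oplus}G$ if there is an $\mathbb{F}_2$-linear map $\mathsf{redu}:\{0,1\}^n\to\{0,1\}^{n'}$ (each output bit is the XOR of a subset of input bits; $g\circ\mathsf{redu}$ denotes substituting each $y_i$ by the corresponding linear form) such that for every clause $g$ of $G$, one of: $g\circ\mathsf{redu}\equiv\mathsf{True}$; $g\circ\mathsf{redu}$ equals some clause of $F$; or $g$ is a width-1 clause (single literal) and $g\circ\mathsf{redu}$ is the XOR (sum over $\mathbb{F}_2$ of the corresponding linear equations) of a subset of clauses of $F$, which are then width-1. $\mathsf{Res}[\oplus]$ (resolution over linear equations modulo 2, Itsykson–Sokolov): lines are linear clauses, i.e., disjunctions of linear equations over $\mathbb{F}_2$; a refutation of a CNF is a sequence of linear clauses ending with the empty clause, where each line is an initial clause (a literal $x$ read as $x=1$, $\neg x$ as $x=0$), or is derived by the resolution rule (from $C\vee(f=0)$ and $D\vee(f=1)$ derive $C\vee D$), or by weakening (derive any linear clause semantically implied by an earlier line). The number of steps is the number of lines. *)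

(* Defs.v *)
From mathcomp Require Import all_boot.
Set Implicit Arguments.
Unset Strict Implicit.
Unset Printing Implicit Defensive.

(* A literal over variables x_0..x_{n-1}: (i, true) is x_i, (i, false) is ~x_i. *)
Definition literal (n : nat) := ('I_n * bool)%type.
Definition clause (n : nat) := seq (literal n).
Definition cnf (n : nat) := seq (clause n).

(* A linear equation over F_2: (S, b) stands for  (XOR_{i in S} x_i) = b. *)
Definition equation (n : nat) := ({set 'I_n} * bool)%type.
Definition lclause (n : nat) := seq (equation n).

Definition assignment (n : nat) := 'I_n -> bool.

Definition eval_eq n (a : assignment n) (e : equation n) : bool :=
  (\big[addb/false]_(i in e.1) a i) == e.2.

Definition sat_lc n (a : assignment n) (C : lclause n) : bool :=
  has (eval_eq a) C.

Definition lit_eq n (l : literal n) : equation n := ([set l.1], l.2).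
Definition clause_lc n (c : clause n) : lclause n := map (@lit_eq n) c.

Definition sum_eqs n (es : seq (equation n)) : equation n :=
  ([set i | odd (count (fun e : equation n => i \in e.1) es)],
   foldr addb false (map snd es)).

(* The linear map redu : {0,1}^n -> {0,1}^n' given by y_j = XOR_{i in redu j} x_i.
   Substitution of y_j by its linear form in an equation over y. *)
Definition subst_eq n n' (redu : 'I_n' -> {set 'I_n}) (e : equation n') : equation n :=
  ([set i | odd #|[set j in e.1 | i \in redu j]|], e.2).
Definition subst_lc n n' (redu : 'I_n' -> {set 'I_n}) (C : lclause n') : lclause n :=
  map (subst_eq redu) C.

Definition clause_comp n n' (redu : 'I_n' -> {set 'I_n}) (g : clause n') : lclause n :=
  subst_lc redu (clause_lc g).

Definition parity_red_by n n' (F : cnf n) (G : cnf n') (redu : 'I_n' -> {set 'I_n}) : Prop :=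
  forall g, g \in G ->
    (forall a : assignment n, sat_lc a (clause_comp redu g))
    \/ (exists2 c, c \in F & clause_comp redu g =i clause_lc c)
    \/ (size g = 1 /\
        exists cs : seq (clause n),
          [/\ uniq cs, {subset cs <= F}, all (fun c => size c == 1) cs &
              clause_comp redu g = [:: sum_eqs (flatten (map (@clause_lc n) cs))]]).

Definition parity_le n n' (F : cnf n) (G : cnf n') : Prop :=
  exists redu : 'I_n' -> {set 'I_n}, parity_red_by F G redu.

Definition valid_line n (F : cnf n) (pi : seq (lclause n)) (k : nat) : Prop :=
  let L := nth [::] pi k in
  (exists2 c, c \in F & L = clause_lc c)
  \/ (exists i j, [/\ i < k, j < k &
        exists (f : {set 'I_n}) (C D : lclause n),
          [/\ perm_eq (nth [::] pi i) ((f, false) :: C),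
              perm_eq (nth [::] pi j) ((f, true) :: D) &
              L = C ++ D]])
  \/ (exists i, i < k /\
        forall a : assignment n, sat_lc a (nth [::] pi i) -> sat_lc a L).

Definition refutation n (F : cnf n) (pi : seq (lclause n)) : Prop :=
  [/\ 0 < size pi,
      (forall k, k < size pi -> valid_line F pi k) &
      last [::] pi = [::]].

(* Main.v *)
Require Import Defs.
From mathcomp Require Import all_boot.
From mathcomp Require Import zify.
Set Implicit Arguments. Unset Strict Implicit. Unset Printing Implicit Defensive.

Lemma xor_odd (T : finType) (A : {pred T}) (f : T -> bool) :
  \big[addb/false]_(i in A) f i = odd (\sum_(i in A) f i).
Proof.
rewrite (big_morph odd oddD (erefl (odd 0))); apply: eq_bigr => i _; by rewrite oddb.
Qed.

Lemma xor_mk (T : finType) (A : {pred T}) (f : T -> bool) :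
  \big[addb/false]_(i in A) f i = \big[addb/false]_i ((i \in A) && f i).
Proof. by rewrite big_mkcond; apply: eq_bigr => i _; case: (i \in A). Qed.

Lemma xor_const (T : finType) (A : {pred T}) (P : T -> bool) (b : bool) :
  \big[addb/false]_(i in A) (P i && b) = odd #|[set i in A | P i]| && b.
Proof.
case: b; last by rewrite andbF big1 // => i _; rewrite andbF.
rewrite andbT xor_odd -sum1_card big_mkcond /=.
congr odd; rewrite [RHS]big_mkcond; apply: eq_bigr => i _; rewrite !inE; by case: (i \in A); case: (P i).
Qed.

Definition ya n n' (redu : 'I_n' -> {set 'I_n}) (a : assignment n) : assignment n' :=
  fun j => \big[addb/false]_(i in redu j) a i.

Lemma eval_subst n n' (redu : 'I_n' -> {set 'I_n}) a (e : equation n') :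
  eval_eq a (subst_eq redu e) = eval_eq (ya redu a) e.
Proof.
rewrite /eval_eq /subst_eq /ya /=; congr (_ == _).
rewrite xor_mk.
under [RHS]eq_bigr => j _ do rewrite xor_mk.
rewrite exchange_big /=; apply: eq_bigr => i _.
by rewrite xor_const inE andbC.
Qed.

Lemma sat_subst n n' (redu : 'I_n' -> {set 'I_n}) a (C : lclause n') :
  sat_lc a (subst_lc redu C) = sat_lc (ya redu a) C.
Proof. by rewrite /sat_lc /subst_lc has_map; apply: eq_has => e; rewrite /= eval_subst. Qed.

Lemma sum_eqs_val n (a : assignment n) (es : seq (equation n)) :
  \big[addb/false]_(i in (sum_eqs es).1) a i =
  foldr addb false (map (fun e : equation n => \big[addb/false]_(i in e.1) a i) es).
Proof.
elim: es => [|e es IH] /=.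
  by rewrite big1 // => i; rewrite inE.
rewrite xor_mk -[X in _ = _ (+) X]IH xor_mk [in RHS]xor_mk -big_split /=.
apply: eq_bigr => i _; rewrite !inE oddD oddb.
by case: (i \in e.1); case: (a i); case: (odd _).
Qed.

Lemma sum_eqs_sat n (a : assignment n) (es : seq (equation n)) :
  all (eval_eq a) es -> eval_eq a (sum_eqs es).
Proof.
move=> H; rewrite /eval_eq sum_eqs_val /=; apply/eqP.
elim: es H => [|e es IH] //= /andP [He Hes].
by rewrite IH // (eqP He).
Qed.
Section S.
Variables (n : nat) (F : cnf n).

Definition ok (P : seq (lclause n)) := forall k, k < size P -> valid_line F P k.
Definition derives (P : seq (lclause n)) (L : lclause n) :=
  exists2 p, p < size P & forall a, sat_lc a (nth [::] P p) -> sat_lc a L.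

Lemma valid_cat P Q k : valid_line F P k -> k < size P -> valid_line F (P ++ Q) k.
Proof.
move=> H kP; have E : forall i, i <= k -> nth [::] (P ++ Q) i = nth [::] P i.
  by move=> i ik; rewrite nth_cat (leq_ltn_trans ik kP).
rewrite /valid_line E //.
case: H => [H|[[i [j [ik jk H]]]|[i [ik H]]]].
- by left.
- by right; left; exists i, j; rewrite (E i (ltnW ik)) (E j (ltnW jk)).
- by right; right; exists i; rewrite (E i (ltnW ik)).
Qed.


Lemma ok_rcons P L : ok P -> valid_line F (rcons P L) (size P) -> ok (rcons P L).
Proof.
move=> HP HL k; rewrite size_rcons ltnS leq_eqVlt => /orP [/eqP ->//|kP].
by rewrite -cats1; apply: valid_cat => //; apply: HP.
Qed.

Lemma nth_rc P L i : i < size P -> nth ([::] : lclause n) (rcons P L) i = nth [::] P i.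
Proof. by move=> iP; rewrite nth_rcons iP. Qed.

Lemma nth_rc_last P L : nth ([::] : lclause n) (rcons P L) (size P) = L.
Proof. by rewrite nth_rcons ltnn eqxx. Qed.

Lemma ok_init P c : ok P -> c \in F -> ok (rcons P (clause_lc c)).
Proof.
move=> HP cF; apply: ok_rcons => //; left; exists c => //; by rewrite nth_rc_last.
Qed.

Lemma ok_weak P i L : ok P -> i < size P ->
  (forall a, sat_lc a (nth [::] P i) -> sat_lc a L) -> ok (rcons P L).
Proof.
move=> HP iP H; apply: ok_rcons => //; right; right; exists i; split => //.
by rewrite nth_rc_last nth_rc.
Qed.

Lemma ok_res P i j f C D : ok P -> i < size P -> j < size P ->
  perm_eq (nth [::] P i) ((f, false) :: C) -> perm_eq (nth [::] P j) ((f, true) :: D) ->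
  ok (rcons P (C ++ D)).
Proof.
move=> HP iP jP Hi Hj; apply: ok_rcons => //; right; left; exists i, j; split => //.
by exists f, C, D; rewrite nth_rc_last !nth_rc.
Qed.

Lemma derives_cat P Q L : derives P L -> derives (P ++ Q) L.
Proof.
case=> p pP H; exists p; first by rewrite size_cat ltn_addr.
by rewrite nth_cat pP.
Qed.

End S.

Lemma sound n (H : cnf n) pi a : refutation H pi ->
  (forall c, c \in H -> sat_lc a (clause_lc c)) -> False.
Proof.
case=> pos val last0 Hc.
have Hall : forall k, k < size pi -> sat_lc a (nth [::] pi k).
  elim/ltn_ind => k IH kp.
  case: (val k kp) => [[c cH ->]|[[i [j [ik jk [f [C [D [Pi Pj ->]]]]]]]|[i [ik Hi]]]].
  - exact: Hc.
  - have Si := IH i ik (ltn_trans ik kp); have Sj := IH j jk (ltn_trans jk kp).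
    rewrite /sat_lc (perm_has _ Pi) /= in Si; rewrite /sat_lc (perm_has _ Pj) /= in Sj.
    rewrite /sat_lc has_cat; move: Si Sj; rewrite /eval_eq /=.
    by case: (\big[addb/false]_(i0 in f) a i0) => /=; case: (has _ C); case: (has _ D).
  - by apply: Hi; apply: IH => //; apply: ltn_trans kp.
have := Hall (size pi).-1; rewrite prednK // leqnn nth_last last0 => /(_ isT).
done.
Qed.

Lemma assemble n n' (F : cnf n) (G : cnf n') redu P piG :
  ok F P -> (forall g, g \in G -> derives P (clause_comp redu g)) -> refutation G piG ->
  refutation F (P ++ map (subst_lc redu) piG).
Proof.
move=> HP HD [pos val last0]; split.
- by rewrite size_cat size_map addn_gt0 pos orbT.
- move=> k; rewrite size_cat size_map => kS.
  case: (ltnP k (size P)) => kP; first by apply: valid_cat => //; apply: HP.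
  have Enth : forall i, i < size piG ->
      nth [::] (P ++ map (subst_lc redu) piG) (size P + i) = subst_lc redu (nth [::] piG i).
    by move=> i iS; rewrite nth_cat ltnNge leq_addr /= addKn (nth_map [::]).
  rewrite -(subnKC kP) in kS *; move: (k - size P) kS => k'; rewrite ltn_add2l => k'S.
  rewrite /valid_line Enth //.
  case: (val k' k'S) => [[c cG ->]|[[i [j [ik jk [f [C [D [Pi Pj ->]]]]]]]|[i [ik Hi]]]].
  - have [p pP Hp] := HD c cG; right; right; exists p; split.
      exact: leq_trans pP (leq_addr _ _).
    by move=> a; rewrite nth_cat pP; apply: Hp.
  - right; left; exists (size P + i), (size P + j); rewrite !ltn_add2l; split => //.
    exists (subst_eq redu (f, false)).1, (map (subst_eq redu) C), (map (subst_eq redu) D).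
    rewrite !Enth ?(ltn_trans ik k'S) ?(ltn_trans jk k'S) //; split.
    + exact: (perm_map (subst_eq redu) Pi).
    + exact: (perm_map (subst_eq redu) Pj).
    + by rewrite /subst_lc map_cat.
  - right; right; exists (size P + i); rewrite ltn_add2l; split => // a.
    by rewrite Enth ?(ltn_trans ik k'S) // !sat_subst; apply: Hi.
- case: piG pos val last0 => [//|h t] _ _ /= last0.
  by rewrite last_cat /= last_map last0.
Qed.

Definition neg n (e : equation n) : equation n := (e.1, ~~ e.2).

Lemma loop n (F : cnf n) t (rest : seq (clause n)) P :
  ok F P -> 0 < size P ->
  last [::] P = map (@neg n) (flatten (map (@clause_lc n) rest)) ++ [:: t] ->
  {subset rest <= F} -> all (fun c => size c == 1) rest ->
  exists B, [/\ ok F (P ++ B), size B = 2 * size rest & last [::] (P ++ B) = [:: t]].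
Proof.
elim: rest P => [|c rest IH] P HP Ppos HL Hsub Hall.
  by exists [::]; rewrite cats0.
case: c Hsub Hall HL => [|[v b] [|l' c]] //= Hsub Hall HL.
set l := (v, b).
set R := map (@neg n) (flatten (map (@clause_lc n) rest)) ++ [:: t].
have cF : [:: l] \in F by apply: Hsub; rewrite inE eqxx.
have HP1 := ok_init HP cF.
have lastP : nth [::] (rcons P (clause_lc [:: l])) (size P).-1 = neg (lit_eq l) :: R.
  by rewrite nth_rc ?prednK // nth_last HL.
have lastl : nth [::] (rcons P (clause_lc [:: l])) (size P) = [:: lit_eq l].
  by rewrite nth_rc_last.
have HP2 : ok F (rcons (rcons P (clause_lc [:: l])) R).
    destruct b.
  - have := ok_res HP1 (i := (size P).-1) (j := size P) (f := [set v]) (C := R) (D := [::]).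
    rewrite cats0; apply; rewrite ?size_rcons ?lastP ?lastl //.
    by rewrite prednK // ltnW.
  - have := ok_res HP1 (i := size P) (j := (size P).-1) (f := [set v]) (C := [::]) (D := R).
    apply; rewrite ?size_rcons ?lastP ?lastl //.
    by rewrite prednK // ltnW.
case: (IH _ HP2) => [||||B [HB sB lB]].
- by rewrite size_rcons.
- by rewrite last_rcons.
- by move=> x hx; apply: Hsub; rewrite inE hx orbT.
- exact: Hall.
exists (clause_lc [:: (v, b)] :: R :: B); split.
- by move: HB; rewrite -!cats1 -!catA.
- by rewrite /= sB mulnS.
- by move: lB; rewrite -!cats1 -!catA.
Qed.

Lemma card_units n (F : cnf n) (cs : seq (clause n)) (l0 : literal n) :
  uniq cs -> all (fun c => size c == 1) cs ->
  (forall v b, [:: (v, b)] \in F -> [:: (v, ~~ b)] \in F -> False) ->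
  {subset cs <= F} -> size cs <= n.
Proof.
move=> U Hall nocomp Hsub.
have inj : {in cs &, injective (fun c : clause n => (head l0 c).1)}.
  move=> c1 c2 h1 h2; move: (allP Hall _ h1) (allP Hall _ h2) (Hsub _ h1) (Hsub _ h2).
  case: c1 h1 => [|[v1 b1] [|]] //; case: c2 h2 => [|[v2 b2] [|]] // _ _ _ _ F1 F2 /= E.
  subst v2; case: (b1 =P b2) => [->//|nb]; exfalso; apply: (nocomp v1 b1) => //.
  by move: F2; case: b1 b2 nb {F1} => [] [].
rewrite -(size_map (fun c : clause n => (head l0 c).1)).
have /card_uniqP <- : uniq (map (fun c : clause n => (head l0 c).1) cs) by rewrite map_inj_in_uniq.
by rewrite -[n in _ <= n]card_ord max_card.
Qed.

Lemma eval_neg n a (e : equation n) : eval_eq a (neg e) = ~~ eval_eq a e.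
Proof. by rewrite /eval_eq /neg /=; case: (\big[addb/false]_(i in e.1) a i); case: e.2. Qed.

Lemma block n n' (F : cnf n) (G : cnf n') redu c0 P g :
  0 < n -> parity_red_by F G redu -> c0 \in F ->
  (forall v b, [:: (v, b)] \in F -> [:: (v, ~~ b)] \in F -> False) ->
  g \in G -> ok F P ->
  exists B, [/\ ok F (P ++ B), size B <= 2 * n &
    derives (P ++ B) (clause_comp redu g)].
Proof.
move=> n0 Hred c0F nocomp gG HP.
have n2 : 1 <= 2 * n by rewrite muln_gt0.
have one : forall c L, c \in F -> (forall a, sat_lc a (clause_lc c) -> sat_lc a L) ->
    exists B, [/\ ok F (P ++ B), size B <= 2 * n & derives (P ++ B) L].
  move=> c L cF HL; exists [:: clause_lc c]; split => //.
  - by rewrite cats1; apply: ok_init.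
  - exists (size P); first by rewrite size_cat addn1.
    by rewrite nth_cat ltnn subnn.
case: (Hred g gG) => [Ht|[[c cF Hc]|[_ [cs [U Hsub Hall Heq]]]]].
- by apply: (one c0) => // a _; apply: Ht.
- by apply: (one c) => // a; rewrite /sat_lc (eq_has_r Hc).
rewrite Heq; set t := sum_eqs _.
have Ht : forall a, all (eval_eq a) (flatten (map (@clause_lc n) cs)) -> sat_lc a [:: t].
  by move=> a H; rewrite /sat_lc /= orbF; apply: sum_eqs_sat.
case: cs U Hsub Hall Heq t Ht => [|c1 cs'] U Hsub Hall Heq t Ht.
  apply: (one c0) => // a _; exact: Ht.
case: c1 U Hsub Hall Heq t Ht => [|[v b] [|]] // U Hsub Hall Heq t Ht.
have c1F : [:: (v, b)] \in F by apply: Hsub; rewrite inE eqxx.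
have HP1 := ok_init HP c1F.
set W := map (@neg n) (flatten (map (@clause_lc n) cs')) ++ [:: t].
have HP2 : ok F (rcons (rcons P (clause_lc [:: (v, b)])) W).
  apply: (ok_weak (i := size P)) => //; first by rewrite size_rcons.
  rewrite nth_rc_last => a; rewrite /sat_lc /= orbF => Hv.
  rewrite has_cat; case E: (has _ _) => //=.
  rewrite orbF; have := Ht a; rewrite /sat_lc /= orbF; apply; rewrite Hv /=.
  apply/allP => e he; move/negbT: E => /hasPn /(_ (neg e)).
  by rewrite map_f // eval_neg negbK => /(_ isT).
case: (loop (t := t) (rest := cs') HP2) => [||||B [HB sB lB]].
- by rewrite size_rcons.
- by rewrite last_rcons.
- by move=> x hx; apply: Hsub; rewrite inE hx orbT.
- exact: Hall.
exists (clause_lc [:: (v, b)] :: W :: B); split.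
- by move: HB; rewrite -!cats1 -!catA.
- have := card_units (v, b) U Hall nocomp Hsub; rewrite /= sB; lia.
- exists (size (P ++ clause_lc [:: (v, b)] :: W :: B)).-1.
    by rewrite prednK // size_cat addn_gt0 orbT.
  move=> a; rewrite nth_last.
  by move: lB; rewrite -!cats1 -!catA => ->.
Qed.

Lemma pre n n' (F : cnf n) (G : cnf n') redu c0 (gs : seq (clause n')) :
  0 < n -> parity_red_by F G redu -> c0 \in F ->
  (forall v b, [:: (v, b)] \in F -> [:: (v, ~~ b)] \in F -> False) ->
  {subset gs <= G} ->
  exists P, [/\ ok F P, size P <= 2 * n * size gs &
    forall g, g \in gs -> derives P (clause_comp redu g)].
Proof.
move=> n0 Hred c0F nocomp; elim: gs => [|g gs IH] Hsub.
  by exists [::]; split => // k.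
case: IH => [x hx|P [HP sP DP]]; first by apply: Hsub; rewrite inE hx orbT.
have [B [HB sB DB]] := block n0 Hred c0F nocomp (Hsub g (mem_head _ _)) HP.
exists (P ++ B); split => //.
- by rewrite size_cat /= mulnS addnC leq_add.
- move=> h; rewrite inE => /orP [/eqP ->//|hgs].
  by apply: derives_cat; apply: DP.
Qed.

Lemma ok_nil n (F : cnf n) : ok F [::].
Proof. by move=> k. Qed.

Theorem theoremC1 (n n' : nat) (F : cnf n) (G : cnf n') (s : nat) :
  parity_le F G ->
  (exists piG : seq (lclause n'), refutation G piG /\ size piG = s) ->
  exists piF : seq (lclause n), refutation F piF /\ size piF <= 2 * n * size G + s.
Proof.
move=> [redu Hred] [piG [HG sG]].
have s1 : 0 < s by case: HG => pos _ _; rewrite -sG.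
have G0 : 0 < size G.
  case: HG => pos val _; case: (val 0 pos) => [[c cG _]|[[i [j [//]]]|[i [//]]]].
  by rewrite lt0n; apply/eqP => /size0nil E; rewrite E in cG.
case: (boolP ([::] \in F)) => [eF|neF].
  exists [:: [::]]; split; last by rewrite /=; lia.
  split => // k; rewrite ltnS leqn0 => /eqP ->; left; by exists [::].
case: F Hred neF => [|c0 F'] Hred neF.
  exfalso; apply: (sound (a := ya redu (fun _ => false)) HG) => g gG.
  rewrite -sat_subst; change (sat_lc (fun _ => false) (clause_comp redu g)).
  case: (Hred g gG) => [Ht|[[c]|[_ [cs [U Hsub Hall Heq]]]]] //.
  case: cs Hsub {U Hall} Heq => [|x cs] Hsub Heq.
    by rewrite Heq /sat_lc /= orbF; apply: sum_eqs_sat.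
  by have := Hsub x (mem_head _ _).
have c0F : c0 \in c0 :: F' by apply: mem_head.
have n0 : 0 < n.
  move: c0F neF; case E: c0 => [|l c] c0F neF; first by rewrite c0F in neF.
  exact: leq_ltn_trans (leq0n _) (ltn_ord l.1).
have nG : 0 < n * size G by rewrite muln_gt0 n0.
case: (boolP [exists v : 'I_n, exists b : bool,
    ([:: (v, b)] \in c0 :: F') && ([:: (v, ~~ b)] \in c0 :: F')]) => [Hc|Hnc].
  case/existsP: Hc => v /existsP [b /andP [F1 F2]].
  have O1 := ok_init (ok_nil (c0 :: F')) F1.
  have O2 := ok_init O1 F2.
  have O3 : ok (c0 :: F') [:: clause_lc [:: (v, b)]; clause_lc [:: (v, ~~ b)]; [::]].
    case: b F1 F2 O1 O2 => F1 F2 O1 O2.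
    - exact: (ok_res (i := 1) (j := 0) (f := [set v]) (C := [::]) (D := [::]) O2).
    - exact: (ok_res (i := 0) (j := 1) (f := [set v]) (C := [::]) (D := [::]) O2).
  exists [:: clause_lc [:: (v, b)]; clause_lc [:: (v, ~~ b)]; [::]]; split.
    by split => //; exact: O3.
  rewrite /=; lia.
have nocomp : forall v b, [:: (v, b)] \in c0 :: F' -> [:: (v, ~~ b)] \in c0 :: F' -> False.
  move=> v b F1 F2; move/negP: Hnc; apply; apply/existsP; exists v; apply/existsP; exists b.
  by rewrite F1 F2.
have [P [HP sP DP]] := pre n0 Hred c0F nocomp (fun x (hx : x \in G) => hx).
exists (P ++ map (subst_lc redu) piG); split; first exact: (assemble HP DP HG).
by rewrite size_cat size_map sG leq_add2r.
Qed.
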